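(* Let $G=(V,E)$ be a finite simple graph and let $x,y$ be easy construction sequences for $G$ whose restrictions to $V$ coincide (the vertices appear in the same order in $x$ and in $y$). Then $\nu(x)=\nu(y)$.
   Context: For a finite simple graph $G=(V,E)$ with $\ell=|V|+|E|$, a construction sequence (c-sequence) is a bijection $x:\{1,\dots,\ell\}\to V\sqcup E$ such that every edge $e=uw$ satisfies $x^{-1}(e)>\max\{x^{-1}(u),x^{-1}(w)\}$. The cost of $x$ is $\nu(x)=\sum_{e=uw\in E}\big(2x^{-1}(e)-x^{-1}(u)-x^{-1}(w)\big)$. A c-sequence is easy if no edge precedes a vertex. *)

(* Defs.v *)
From mathcomp Require Import all_boot all_algebra.
Import GRing.Theory.
Set Implicit Arguments. Unset Strict Implicit. Unset Printing Implicit Defensive.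

Definition simple_graph (V : finType) (adj : rel V) : Prop :=
  irreflexive adj /\ symmetric adj.

Definition is_edge (V : finType) (adj : rel V) (S : {set V}) : bool :=
  [exists u, exists w, adj u w && (S == [set u; w])].

Definition edge (V : finType) (adj : rel V) := {S : {set V} | is_edge adj S}.

Definition item (V : finType) (adj : rel V) := (V + edge adj)%type.

(* A sequence x : {1..l} -> V ⊔ E is represented as the list
   [x(1); ...; x(l)]; it is a bijection iff it is a duplicate-free
   enumeration of all items. x^{-1}(a) = index a s + 1. *)
Definition pos (V : finType) (adj : rel V) (s : seq (item adj)) (a : item adj) : nat :=
  (index a s).+1.

Definition is_bijective_seq (V : finType) (adj : rel V) (s : seq (item adj)) : bool :=
  uniq s && (size s == #|{: item adj}|).

Definition c_sequence (V : finType) (adj : rel V) (s : seq (item adj)) : Prop :=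
  is_bijective_seq s /\
  forall (f : edge adj) (u : V), u \in val f -> pos s (inl u) < pos s (inr f).

Definition cost (V : finType) (adj : rel V) (s : seq (item adj)) : int :=
  (\sum_(f : edge adj)
     ((2 * pos s (inr f))%:Z - \sum_(u in val f) (pos s (inl u))%:Z))%R.

Definition easy (V : finType) (adj : rel V) (s : seq (item adj)) : Prop :=
  forall (f : edge adj) (u : V), pos s (inl u) < pos s (inr f).

Definition vertex_order (V : finType) (adj : rel V) (s : seq (item adj)) : seq V :=
  pmap (fun a => match a with inl v => Some v | inr _ => None end) s.

(* Main.v *)
Require Import Defs.
From mathcomp Require Import all_boot all_algebra.

Section Aux.
Variables (A B : eqType).
Definition getl (a : A + B) : option A := match a with inl v => Some v | inr _ => None end.

Lemma idx_inl (s : seq (A + B)) (v : A) :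
  (forall g, index (inl v) s < index (inr g) s) ->
  index (inl v) s = index v (pmap getl s).
Proof.
elim: s => [|a s IH] //= H.
case: a H => [w|g] H /=.
- case: (eqVneq w v) => [->|ne].
  + by rewrite eqxx.
  + have ne' : (inl w == inl v :> A + B) = false.
      by apply/negbTE; apply: contra ne => /eqP [->].
    by rewrite ne' IH // => g; move: (H g); rewrite ne' /= ltnS.
- by move: (H g); case: eqP => _; case: eqP.
Qed.
End Aux.

Lemma sum_index (T : finType) (s : seq T) :
  uniq s -> size s = #|T| -> \sum_(a : T) index a s = \sum_(0 <= i < #|T|) i.
Proof.
move=> Us Ss.
have Hs : size (enum T) <= size s by rewrite -cardE Ss.
have [_ Es] := uniq_min_size Us (fun a _ => mem_enum T a) Hs.
have P : perm_eq (enum T) s.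
  by apply: uniq_perm; [exact: enum_uniq | exact: Us | move=> a; rewrite -Es].
rewrite -big_enum /= (perm_big _ P) /=.
clear Hs; case: s Us Ss P Es => [|a0 s'] Us Ss P Es.
  by rewrite -Ss big_nil big_geq.
rewrite (big_nth a0) -Ss big_nat_cond [RHS]big_nat_cond.
apply: eq_bigr => i /andP [/andP [_ Hi] _].
by rewrite index_uniq.
Qed.

Theorem lemma4 (V : finType) (adj : rel V) (x y : seq (item adj)) :
  simple_graph adj ->
  c_sequence x -> c_sequence y -> easy x -> easy y ->
  vertex_order x = vertex_order y ->
  cost x = cost y.
Proof.
move=> _ [/andP [Ux /eqP Sx] _] [/andP [Uy /eqP Sy] _] Ex Ey Vxy.
have Pv : forall v, pos x (inl v) = pos y (inl v).
  move=> v; rewrite /pos (@idx_inl _ _ x v); last by move=> g; have := Ex g v.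
  rewrite (@idx_inl _ _ y v); last by move=> g; have := Ey g v.
  by have := Vxy; rewrite /vertex_order => ->.
have Pe : \sum_(f : edge adj) pos x (inr f) = \sum_(f : edge adj) pos y (inr f).
  have Tx := @sum_index _ x Ux Sx; have Ty := @sum_index _ y Uy Sy.
  have : \sum_(a : item adj) index a x = \sum_(a : item adj) index a y.
    by rewrite Tx Ty.
  rewrite !big_sumType /=.
  under eq_bigr => v _ do have -> : index (inl v) x = index (inl v) y
    by apply: succn_inj; exact: Pv.
  move/eqP; rewrite eqn_add2l => /eqP He.
  rewrite /pos.
  under eq_bigr do rewrite -addn1.
  under [RHS]eq_bigr do rewrite -addn1.
  by rewrite !big_split /= He.
rewrite /cost !GRing.sumrB.
congr (_ - _)%R.
  rewrite -!(big_morph Posz PoszD (erefl (Posz 0))).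
  congr Posz.
  by rewrite -!big_distrr /= Pe.
apply: eq_bigr => f _; apply: eq_bigr => u _.
by rewrite Pv.
Qed.
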